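(* Let $G$ be an $(N,k)$ Adinkra with associated doubly even code $C$. Then $G$ has Klein flip degeneracy (i.e. the Adinkra obtained from $G$ by exchanging bosons and fermions is not equivalent to $G$) if and only if the all-ones word $(1,1,\dots,1)$ belongs to $C$. This in turn occurs only if $N\equiv 0\pmod 4$.
   Context: An Adinkra of dimension $N$ is a finite connected simple graph $G=(V,E)$ with: a bipartition of $V$ into bosons and fermions (every edge joins a boson and a fermion); a height function $\mathrm{hgt}:V\to\mathbb{Z}$ with adjacent vertices at heights differing by $1$; a coloring of $E$ by colors $\{1,\dots,N\}$ such that each vertex is incident to exactly one edge of each color; an edge parity $\pi:E\to\mathbb{Z}_2$ (parity $1$ = dashed); such that every path with edge colors $(i,j)$, $i\ne j$, lies in a unique 4-cycle with colors $(i,j,i,j)$, each having an odd number of dashed edges. If $|V|=2^{N-k}$, $G$ is an $(N,k)$ Adinkra. Switching a vertex reverses the parity of its incident edges. Two Adinkras are equivalent if there is a bijection between their vertex sets preserving adjacency, edge colors and the boson/fermion bipartition which becomes parity-preserving after switching some set of vertices (heights need not be preserved). A doubly even $(N,k)$ code is a $k$-dimensional subspace of $\mathbb{Z}_2^N$ all of whose elements have Hamming weight $\equiv0\pmod4$. Labeling the vertices of an $N$-cube Adinkra by $\mathbb{Z}_2^N$ so that color-$i$ edges join $v$ and $v+e_i$, every $(N,k)$ Adinkra is equivalent to one obtained by identifying vertices whose labels differ by elements of some doubly even $(N,k)$ code $C$; this $C$ is the associated code. *)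

(* Defs.v *)
From HB Require Import structures.
From mathcomp Require Import all_boot all_order all_algebra.
Set Implicit Arguments. Unset Strict Implicit. Unset Printing Implicit Defensive.
Import GRing.Theory.
Local Open Scope ring_scope.

(* Data of a (candidate) Adinkra of dimension N on a finite vertex type V.
   - adj   : the (simple) graph's adjacency relation
   - col   : edge colours (meaningful on edges only), colours are 'I_N = {1..N}
   - par   : edge parity (true = dashed, i.e. parity 1), meaningful on edges
   - boson : the bipartition (true = boson, false = fermion)
   - hgt   : the height function *)
Record adinkra_data (V : finType) (N : nat) := AdinkraData {
  adj : rel V;
  col : V -> V -> 'I_N;
  par : V -> V -> bool;
  boson : pred V;
  hgt : V -> int
}.

Definition is_adinkra (V : finType) (N : nat) (A : adinkra_data V N) : Prop :=
  (forall v, ~~ adj A v v) /\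
  (forall v w, adj A v w = adj A w v) /\
  (forall v w, adj A v w -> col A v w = col A w v) /\
  (forall v w, adj A v w -> par A v w = par A w v) /\
  (forall v w, connect (adj A) v w) /\
  (forall v w, adj A v w -> boson A v != boson A w) /\
  (forall v w, adj A v w -> (hgt A v + 1 == hgt A w) || (hgt A w + 1 == hgt A v)) /\
  (forall v (i : 'I_N), exists! w, adj A v w /\ col A v w = i) /\
  (forall (u v w : V) (i j : 'I_N), i != j ->
     adj A u v -> col A u v = i -> adj A v w -> col A v w = j ->
     exists! x, [/\ adj A w x, col A w x = i, adj A x u, col A x u = j &
                    odd (par A u v + par A v w + par A w x + par A x u)%N]).

(* Equivalence of Adinkras: bijection preserving adjacency, colours and the
   boson/fermion bipartition, parity-preserving after switching the vertices of
   some set S (switching a vertex reverses the parity of its incident edges).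
   Heights need not be preserved. *)
Definition adinkra_equiv (V1 V2 : finType) (N : nat)
    (A1 : adinkra_data V1 N) (A2 : adinkra_data V2 N) : Prop :=
  exists f : V1 -> V2,
    [/\ bijective f,
        (forall v w, adj A2 (f v) (f w) = adj A1 v w),
        (forall v w, adj A1 v w -> col A2 (f v) (f w) = col A1 v w),
        (forall v, boson A2 (f v) = boson A1 v) &
        exists S : {set V1}, forall v w, adj A1 v w ->
          par A2 (f v) (f w) = par A1 v w (+) (v \in S) (+) (w \in S)].

Definition klein_flip (V : finType) (N : nat) (A : adinkra_data V N)
  : adinkra_data V N :=
  AdinkraData (adj A) (col A) (par A) (predC (boson A)) (hgt A).

Definition hweight (N : nat) (x : 'rV['F_2]_N) : nat := #|[set i | x ord0 i != 0%R]|.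

Definition doubly_even_code (N k : nat) (C : {vspace 'rV['F_2]_N}) : Prop :=
  \dim C = k /\ forall c, c \in C -> (hweight c %% 4 = 0)%N.

Definition unitv (N : nat) (i : 'I_N) : 'rV['F_2]_N := delta_mx 0 i.

(* C is the associated code of A: A is equivalent to the Adinkra obtained from
   the N-cube (vertices labelled by Z_2^N, colour-i edges joining x and x+e_i)
   by identifying labels differing by elements of C.  Concretely: there is a
   surjective map q from the labels onto V identifying exactly the C-cosets,
   sending each colour-i cube edge {x, x+e_i} to a colour-i edge of A, and
   sending the cube's boson/fermion bipartition (by parity of weight) to that
   of A. (Dashing and heights of the quotient are those transported from A.) *)
Definition associated_code (V : finType) (N : nat) (A : adinkra_data V N)
    (C : {vspace 'rV['F_2]_N}) : Prop :=
  exists q : 'rV['F_2]_N -> V,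
    [/\ (forall v, exists x, q x = v),
        (forall x y, q x = q y <-> x - y \in C),
        (forall x (i : 'I_N), adj A (q x) (q (x + unitv i)) /\
                             col A (q x) (q (x + unitv i)) = i) &
        exists b : bool, forall x, boson A (q x) = b (+) odd (hweight x)].

Definition all_ones (N : nat) : 'rV['F_2]_N := const_mx 1.

(* Main.v *)
Require Import Defs.
From mathcomp Require Import all_boot all_order all_algebra.
Import GRing.Theory.
Set Implicit Arguments. Unset Strict Implicit. Unset Printing Implicit Defensive.
Local Open Scope ring_scope.

Notation "\xor_ ( i < n ) F" := (\big[addb/false]_(i < n) F)
  (at level 41, F at level 41, i, n at level 50).

Lemma F2_add (a b : 'F_2) : (a + b != 0) = (a != 0) (+) (b != 0).
Proof. by case: a => [[|[|//]] ?]; case: b => [[|[|//]] ?]. Qed.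
Lemma F2_mul (a b : 'F_2) : (a * b != 0) = (a != 0) && (b != 0).
Proof. by case: a => [[|[|//]] ?]; case: b => [[|[|//]] ?]. Qed.
Lemma F2_eq (a b : 'F_2) : (a != 0) = (b != 0) -> a = b.
Proof. by case: a => [[|[|//]] ?]; case: b => [[|[|//]] ?] //= _; apply: val_inj. Qed.

Definition bn N (x : 'rV['F_2]_N) (j : nat) : bool :=
  if @insub nat (fun k => (k < N)%N) 'I_N j is Some o then x ord0 o != 0 else false.

Lemma bnE N (x : 'rV['F_2]_N) (o : 'I_N) : bn x o = (x 0 o != 0).
Proof. by rewrite /bn valK. Qed.
Lemma bn_out N (x : 'rV['F_2]_N) j : (N <= j)%N -> bn x j = false.
Proof. by move=> h; rewrite /bn insubN // -leqNgt. Qed.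
Lemma bnD N (x y : 'rV['F_2]_N) j : bn (x + y) j = bn x j (+) bn y j.
Proof. by rewrite /bn; case: insubP => // o _ _; rewrite mxE F2_add. Qed.
Lemma bn0 N j : bn (0 : 'rV['F_2]_N) j = false.
Proof. by rewrite /bn; case: insubP => // o _ _; rewrite mxE eqxx. Qed.
Lemma bn_unit N (i : 'I_N) j : bn (unitv i) j = (j == i).
Proof.
rewrite /bn /unitv; case: insubP => [o _ <-|].
  by rewrite mxE eqxx /=; case: (@eqP _ o i) => [->|/eqP/negbTE ne]; rewrite ?eqxx ?oner_neq0 // ne eqxx.
by move=> h; apply/esym/negbTE; apply: contra h => /eqP ->; exact: ltn_ord.
Qed.
Lemma bn1 N j : bn (all_ones N) j = (j < N)%N.
Proof.
rewrite /bn /all_ones; case: insubP => [o -> _|/negbTE -> //].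
by rewrite mxE oner_neq0.
Qed.
Lemma vecP N (x y : 'rV['F_2]_N) : (forall j, bn x j = bn y j) -> x = y.
Proof. by move=> h; apply/rowP => o; apply: F2_eq; rewrite -!bnE. Qed.
Lemma vv N (x : 'rV['F_2]_N) : x + x = 0.
Proof. by apply: vecP => j; rewrite bnD bn0 addbb. Qed.
Lemma vvK N (x y : 'rV['F_2]_N) : x + y + y = x.
Proof. by rewrite -addrA vv addr0. Qed.

Lemma oddw N (x : 'rV['F_2]_N) : odd (hweight x) = \xor_(j < N) bn x j.
Proof.
rewrite /hweight -sum1dep_card big_mkcond /=.
rewrite (big_morph odd oddD (erefl : odd 0 = false)); apply: eq_bigr => o _.
by rewrite bnE; case: (x 0 o != 0).
Qed.

Lemma bil n (u v : nat -> bool) :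
  \xor_(j < n) (u j && \xor_(m < j) v m) (+) \xor_(j < n) (v j && \xor_(m < j) u m)
  = ((\xor_(j < n) u j) && (\xor_(j < n) v j)) (+) \xor_(j < n) (u j && v j).
Proof.
elim: n => [|n IH]; first by rewrite !big_ord0.
rewrite !big_ord_recr /=.
move: IH; move: (u n) (v n).
move: (\xor_(i < n) (u i && v i)) (\xor_(i < n) u i) (\xor_(i < n) v i).
move: (\xor_(i < n) (u i && \xor_(m < i) v m)) (\xor_(i < n) (v i && \xor_(m < i) u m)).
by do 7!case.
Qed.

Lemma F2_01 (a : 'F_2) : a = 0 \/ a = 1.
Proof. by case: a => [[|[|//]] ?]; [left|right]; apply: val_inj. Qed.

Lemma reach N (P : 'rV['F_2]_N -> Prop) :
  (forall x i, P x -> P (x + unitv i)) -> P 0 -> forall x, P x.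
Proof.
move=> hP h0 x.
suff H : forall v y, P y -> P (y + v) by rewrite -[x]add0r; apply: H.
move=> v; rewrite (row_sum_delta v).
apply: (big_ind (fun v => forall y, P y -> P (y + v))).
- by move=> y; rewrite addr0.
- by move=> a b ha hb y hy; rewrite addrA; apply: hb; apply: ha.
move=> j _ y hy; case: (F2_01 (v 0 j)) => ->; first by rewrite scale0r addr0.
by rewrite scale1r; apply: hP.
Qed.

Lemma lin N (F : 'rV['F_2]_N -> bool) (a : nat -> bool) :
  (forall x i, F (x + unitv i) = F x (+) a i) ->
  forall x, F x = F 0 (+) \xor_(j < N) (bn x j && a j).
Proof.
move=> hF.
pose L (x : 'rV['F_2]_N) := \xor_(j < N) (bn x j && a j).
have hL : forall x i, L (x + unitv i) = L x (+) a i.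
  move=> x i; rewrite /L.
  rewrite (eq_bigr (fun j : 'I_N => (bn x j && a j) (+) ((j == i) && a j))); last first.
    by move=> j _; rewrite bnD bn_unit andb_addl.
  rewrite big_split /=; congr (_ (+) _).
  rewrite (bigD1 i) //= eqxx big1 ?addbF // => j ne.
  by move/negbTE: ne => ->.
have L0 : L 0 = false by rewrite /L big1 // => j _; rewrite bn0.
suff H : forall x, F x (+) L x = F 0 (+) L 0.
  by move=> x; move: (H x); rewrite L0 addbF => <-; rewrite -addbA addbb addbF.
apply: reach => [x i <-|//]; by rewrite hF hL addbACA addbb addbF.
Qed.

Definition p0 N (x : 'rV['F_2]_N) (i : nat) := \xor_(m < i) bn x m.

Lemma p0D N (x y : 'rV['F_2]_N) i : p0 (x + y) i = p0 x i (+) p0 y i.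
Proof. by rewrite /p0 -big_split; apply: eq_bigr => j _; rewrite bnD. Qed.
Lemma p0_0 N i : p0 (0 : 'rV['F_2]_N) i = false.
Proof. by rewrite /p0 big1 // => j _; rewrite bn0. Qed.
Lemma p0_unit N (k : 'I_N) i : p0 (unitv k) i = (k < i)%N.
Proof.
rewrite /p0; elim: i => [|i IH]; first by rewrite big_ord0.
rewrite big_ord_recr /= IH bn_unit [in RHS]ltnS.
by case: (ltngtP k i) => // ->; rewrite eqxx ltnn.
Qed.

Lemma cob N (g : 'rV['F_2]_N -> 'I_N -> bool) :
  (forall x i, g (x + unitv i) i = g x i) ->
  (forall x i j, i != j -> g (x + unitv i) j (+) g x j = g (x + unitv j) i (+) g x i) ->
  exists h : 'rV['F_2]_N -> bool, forall x i, h (x + unitv i) (+) h x = g x i.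
Proof.
move=> H1 H2.
suff H : forall m, (m <= N)%N -> exists h : 'rV['F_2]_N -> bool,
    forall x (i : 'I_N), (i < m)%N -> h (x + unitv i) (+) h x = g x i.
  by case: (H N (leqnn N)) => h hh; exists h => x i; apply: hh.
elim => [|m IH] hm; first by exists (fun _ => false).
set o : 'I_N := Ordinal hm.
case: (IH (ltnW hm)) => hh Hh.
exists (fun x => if bn x m then hh (x + unitv o) (+) g (x + unitv o) o else hh x).
move=> x i; rewrite ltnS leq_eqVlt => /orP [/eqP ei | lt].
  have -> : i = o by apply: val_inj.
  rewrite bnD bn_unit eqxx addbT.
  case: (bn x m) => /=; first by rewrite addbA addbb H1.
  by rewrite vvK addbAC addbb.
have ne : i != o by rewrite neq_ltn lt.
rewrite bnD bn_unit (gtn_eqF lt) addbF.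
case: (bn x m); last exact: Hh.
rewrite (addrAC x (unitv i)).
set y := x + unitv o.
have E1 := Hh y i lt.
have E2 := H2 y i o ne.
rewrite /y vvK -/y in E2.
move: E1 E2; move: (hh (y + unitv i)) (hh y) (g (y + unitv i) o) (g y o) (g x i) (g y i).
by do 6!case.
Qed.

Lemma xor_dot N (c : 'rV['F_2]_N) (T : 'M['F_2]_N) j :
  ((c *m T) 0 j != 0) = \xor_(m < N) (bn c m && (T m j != 0)).
Proof.
have e0 : ((0:'F_2) != 0) = false by rewrite eqxx.
rewrite mxE (big_morph (fun a : 'F_2 => a != 0) F2_add e0).
by apply: eq_bigr => m _; rewrite F2_mul bnE.
Qed.

Lemma dual N (C : {vspace 'rV['F_2]_N}) : all_ones N \notin C ->
  exists t : 'rV['F_2]_N, \xor_(j < N) bn t j = true /\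
    forall c, c \in C -> \xor_(j < N) (bn t j && bn c j) = false.
Proof.
move=> n1.
pose B : 'M['F_2]_(\dim C, N) := \matrix_(i < \dim C) tnth (vbasis C) i.
have sub : forall c, c \in C -> (c <= B)%MS.
  move=> c /coord_vbasis ->; apply: summx_sub => i _; apply: scalemx_sub.
  by rewrite -(tnth_nth 0) -(rowK (fun i => tnth (vbasis C) i)) row_sub.
have nB : ~~ (all_ones N <= B)%MS.
  apply: contra n1 => /submxP [D ->]; rewrite mulmx_sum_row.
  apply: memv_suml => i _; apply: memvZ; rewrite rowK.
  by apply: vbasis_mem; apply: mem_tnth.
set T := cokermx B.
have [j hj] : exists j, (all_ones N *m T) 0 j != 0.
  apply/existsP; apply: contraR nB => /existsPn h; rewrite submxE; apply/eqP.
  by apply/rowP => k; rewrite [RHS]mxE; apply/eqP/negPn; apply: h.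
exists (col j T)^T; split.
  rewrite -[X in _ = X]hj xor_dot; apply: eq_bigr => m _.
  by rewrite bn1 ltn_ord (bnE (col j T)^T) !mxE.
move=> c /sub; rewrite submxE -/T => /eqP cT.
have : ((c *m T) 0 j != 0) = false by rewrite cT mxE eqxx.
rewrite xor_dot => E; rewrite -[X in _ = X]E; apply: eq_bigr => m _.
by rewrite andbC (bnE (col j T)^T) !mxE.
Qed.

Lemma Ladd N (x y : 'rV['F_2]_N) (a : nat -> bool) :
  \xor_(j < N) (bn (x + y) j && a j) =
  \xor_(j < N) (bn x j && a j) (+) \xor_(j < N) (bn y j && a j).
Proof. by rewrite -big_split; apply: eq_bigr => j _; rewrite bnD andb_addl. Qed.

Lemma Lunit N (i : 'I_N) (a : nat -> bool) :
  \xor_(j < N) (bn (unitv i) j && a j) = a i.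
Proof.
rewrite (bigD1 i) //= bn_unit eqxx big1 ?addbF // => j ne.
by rewrite bn_unit; case: (@eqP _ (j:nat) i) => // /val_inj e; rewrite e eqxx in ne.
Qed.

Lemma xorD N (x y : 'rV['F_2]_N) :
  \xor_(j < N) bn (x + y) j = \xor_(j < N) bn x j (+) \xor_(j < N) bn y j.
Proof. by rewrite -big_split; apply: eq_bigr => j _; rewrite bnD. Qed.

Lemma hw1 N : hweight (all_ones N) = N.
Proof.
rewrite /hweight.
have -> : [set i | all_ones N 0 i != 0] = setT.
  by apply/setP => i; rewrite !inE mxE oner_neq0.
by rewrite cardsT card_ord.
Qed.

Local Close Scope ring_scope.
Theorem mainTheorem7 (N k : nat) (V : finType) (A : adinkra_data V N)
    (C : {vspace 'rV['F_2]_N}) :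
  is_adinkra A -> #|V| = 2 ^ (N - k) ->
  doubly_even_code k C -> associated_code A C ->
  ((~ adinkra_equiv A (klein_flip A)) <-> all_ones N \in C) /\
  (all_ones N \in C -> N %% 4 = 0).
Proof.
Local Open Scope ring_scope.
move=> hA _ [_ hwt] [q [qsur qeq qedge [bb hbos]]].
case: hA => _ [hsym [hcolsym [hpar [_ [_ [_ [huniq hsq]]]]]]].
have N4 : all_ones N \in C -> (N %% 4 = 0)%N.
  by move=> /hwt; rewrite hw1.
split=> //.
have opp : forall y : 'rV['F_2]_N, - y = y.
  by move=> y; rewrite -[LHS]add0r -(vv y) addrK.
have qC : forall x c, c \in C -> q (x + c) = q x.
  by move=> x c hc; apply/qeq; rewrite addrC addKr.
have qE : forall x y, q x = q y -> x + y \in C.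
  by move=> x y /qeq; rewrite opp.
have nbr : forall x i w, adj A (q x) w -> Defs.col A (q x) w = i -> w = q (x + unitv i).
  move=> x i w a c; case: (huniq (q x) i) => w0 [_ U].
  by rewrite -(U w (conj a c)) (U _ (qedge x i)).
pose p x i := par A (q x) (q (x + unitv i)).
have psym : forall x i, par A (q (x + unitv i)) (q x) = p x i.
  by move=> x i; rewrite hpar // hsym; case: (qedge x i).
have P1 : forall x i, p (x + unitv i) i = p x i.
  by move=> x i; rewrite /p vvK psym.
have P2 : forall x c i, c \in C -> p (x + c) i = p x i.
  by move=> x c i hc; rewrite /p qC // addrAC qC.
have P3 : forall x i j, i != j ->
    p x i (+) p (x + unitv i) j (+) p (x + unitv j) i (+) p x j = true.
  move=> x i j ne.
  have [a1 c1] := qedge x i.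
  have [a2 c2] := qedge (x + unitv i) j.
  case: (hsq _ _ _ i j ne a1 c1 a2 c2) => z [[a3 c3 a4 c4 od] _].
  move: (nbr _ _ _ a3 c3); rewrite (addrAC x (unitv i)) vvK => ez.
  have E3 : par A (q (x + unitv i + unitv j)) (q (x + unitv j)) = p (x + unitv j) i.
    by rewrite (addrAC x (unitv i)) psym.
  by move: od; rewrite ez E3 psym !oddD !oddb.
pose g x (i : 'I_N) := p x i (+) p0 x i.
have G1 : forall x i, g (x + unitv i) i = g x i.
  by move=> x i; rewrite /g P1 p0D p0_unit ltnn addbF.
have G2 : forall x i j, i != j ->
    g (x + unitv i) j (+) g x j = g (x + unitv j) i (+) g x i.
  move=> x i j ne; rewrite /g !p0D !p0_unit.
  have hij : (i < j)%N (+) (j < i)%N = true.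
    by move: ne; rewrite neq_ltn; case: (ltngtP i j).
  move: (P3 x i j ne) hij.
  move: (p x i) (p x j) (p (x + unitv i) j) (p (x + unitv j) i) (p0 x i) (p0 x j) (i < j)%N (j < i)%N.
  by do 8!case.
have [h dh] := cob G1 G2.
have K : forall c, c \in C -> forall x,
    h (x + c) (+) h x = h c (+) h 0 (+) \xor_(j < N) (bn x j && p0 c j).
  move=> c hc; have := @lin N (fun x => h (x + c) (+) h x) (p0 c).
  rewrite add0r; apply => x i.
  have e1 := dh (x + c) i; have e2 := dh x i.
  rewrite (addrAC x (unitv i)).
  have e3 : g (x + c) i (+) g x i = p0 c i by rewrite /g P2 // p0D; case: (p x i); case: (p0 x i); case: (p0 c i).
  move: e1 e2 e3; move: (h (x + c + unitv i)) (h (x + c)) (h (x + unitv i)) (h x) (g (x + c) i) (g x i) (p0 c i).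
  by do 7!case.
have qI : forall a b, a + b \in C -> q a = q b.
  by move=> a b hab; apply/qeq; rewrite opp.
have shq : forall a b t', q a = q b -> q (a + t') = q (b + t').
  move=> a b t' /qE hab; apply: qI.
  by rewrite addrACA vv addr0.
split.
  move=> nE; apply/negPn/negP => n1; apply: nE.
  have [t [todd tC]] := dual n1.
  pose pre v := odflt 0 [pick x | q x == v].
  have preK : forall v, q (pre v) = v.
    move=> v; rewrite /pre; case: pickP => [x /eqP //|H].
    by case: (qsur v) => x hx; move: (H x); rewrite hx eqxx.
  pose f v := q (pre v + t).
  have fq : forall x, f (q x) = q (x + t) by move=> x; apply: shq; rewrite preK.
  have adjS : forall x y t', adj A (q x) (q y) -> adj A (q (x + t')) (q (y + t')).
    move=> x y t' a; rewrite (shq _ _ t' (nbr _ _ _ a (erefl _))) (addrAC x).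
    by case: (qedge (x + t') (Defs.col A (q x) (q y))).
  pose sf x := h (x + t) (+) h x (+) \xor_(j < N) (bn x j && p0 t j).
  have sC : forall x c, c \in C -> sf (x + c) = sf x.
    move=> x c hc; rewrite /sf Ladd (addrAC x c).
    have e1 := K c hc (x + t); have e2 := K c hc x.
    have e3 : \xor_(j < N) (bn (x + t) j && p0 c j) =
       \xor_(j < N) (bn x j && p0 c j) (+) \xor_(j < N) (bn t j && p0 c j) by rewrite Ladd.
    have B : \xor_(j < N) (bn t j && p0 c j) (+) \xor_(j < N) (bn c j && p0 t j)
      = ((\xor_(j < N) bn t j) && (\xor_(j < N) bn c j)) (+) \xor_(j < N) (bn t j && bn c j)
      := bil N (bn t) (bn c).
    have ev : \xor_(j < N) bn c j = false.
      rewrite -oddw; move/eqP: (hwt c hc); rewrite -/(dvdn 4 _) => d.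
      by apply/negbTE; rewrite -dvdn2; apply: dvdn_trans d.
    rewrite ev tC // andbF /= in B.
    move: e1 e2 e3 B.
    move: (\xor_(j < N) (bn x j && p0 c j)) (\xor_(j < N) (bn (x + t) j && p0 c j))
      (\xor_(j < N) (bn t j && p0 c j)) (\xor_(j < N) (bn c j && p0 t j))
      (\xor_(j < N) (bn x j && p0 t j)).
    move: (h (x + t + c)) (h (x + t)) (h (x + c)) (h x) (h c) (h 0).
    by do 11!case.
  have memS : forall x, (q x \in [set v | sf (pre v)]) = sf x.
    move=> x; rewrite inE.
    have : pre (q x) + x \in C by apply: qE; rewrite preK.
    by move/(sC x); rewrite addrC vvK => ->.
  exists f; split.
  - exists f => v; case: (qsur v) => x <-; by rewrite !fq vvK.
  - move=> v w; case: (qsur v) => x <-; case: (qsur w) => y <- /=; rewrite !fq.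
    apply/idP/idP => a; last exact: adjS.
    by move: (adjS _ _ t a); rewrite !vvK.
  - move=> v w; case: (qsur v) => x <-; case: (qsur w) => y <- /= a.
    rewrite !fq (shq _ _ t (nbr _ _ _ a (erefl _))) (addrAC x).
    by case: (qedge (x + t) (Defs.col A (q x) (q y))).
  - move=> v; case: (qsur v) => x <- /=; rewrite fq !hbos !oddw xorD todd.
    by rewrite addbT addbN negbK.
  exists [set v | sf (pre v)] => v w; case: (qsur v) => x <-; case: (qsur w) => y <- /= a.
  set i := Defs.col A (q x) (q y).
  have ey : q y = q (x + unitv i) := nbr _ _ _ a (erefl _).
  rewrite !fq (shq _ _ t ey) ey (addrAC x) !memS.
  have e1 := dh (x + t) i; have e2 := dh x i.
  rewrite /sf (addrAC x (unitv i)) Ladd Lunit.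
  move: e1 e2; rewrite /g p0D -/(p (x + t) i) -/(p x i).
  move: (h (x + t + unitv i)) (h (x + t)) (h (x + unitv i)) (h x) (p (x + t) i) (p x i)
    (p0 x i) (p0 t i) (\xor_(j < N) (bn x j && p0 t j)).
  by do 9!case.
move=> h1 [f [fbij fadj fcol fbos [S fpar]]].
simpl in fadj, fcol, fbos, fpar.
case: (qsur (f (q 0))) => t ht.
have fq : forall x, f (q x) = q (x + t).
  apply: reach => [x i hx|]; last by rewrite add0r.
  have [a c] := qedge x i.
  have a' : adj A (q (x + t)) (f (q (x + unitv i))) by rewrite -hx fadj.
  have c' : Defs.col A (q (x + t)) (f (q (x + unitv i))) = i by rewrite -hx fcol.
  by rewrite (nbr _ _ _ a' c') addrAC.
have todd : \xor_(j < N) bn t j = true.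
  move: (fbos (q 0)); rewrite fq add0r !hbos !oddw.
  rewrite [X in _ = _ (+) X]big1 => [|j _]; last by rewrite bn0.
  by case: (\xor_(j < N) bn t j); case: (bb).
pose s x := q x \in S.
have Ps : forall x i, p (x + t) i = p x i (+) s x (+) s (x + unitv i).
  move=> x i; have [a _] := qedge x i.
  by move: (fpar _ _ a); rewrite !fq (addrAC x (unitv i)).
pose r x := s x (+) h (x + t) (+) h x.
have dr : forall x i, r (x + unitv i) = r x (+) p0 t i.
  move=> x i; rewrite /r.
  have e1 := dh (x + t) i; have e2 := dh x i.
  have e3 := Ps x i.
  rewrite (addrAC x (unitv i)).
  move: e1 e2 e3; rewrite /g p0D.
  move: (h (x + t + unitv i)) (h (x + t)) (h (x + unitv i)) (h x) (p (x + t) i) (p x i)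
    (p0 x i) (p0 t i) (s x) (s (x + unitv i)).
  by do 10!case.
have R1 := lin dr (all_ones N).
have s1 : s (all_ones N) = s 0.
  by rewrite /s -{1}[all_ones N]add0r qC.
have K1 := K _ h1 t.
move: R1 K1; rewrite /r s1 add0r (addrC (all_ones N) t).
have B : \xor_(j < N) (bn (all_ones N) j && p0 t j) (+) \xor_(j < N) (bn t j && p0 (all_ones N) j)
   = ((\xor_(j < N) bn (all_ones N) j) && (\xor_(j < N) bn t j)) (+) \xor_(j < N) (bn (all_ones N) j && bn t j)
  := bil N (bn (all_ones N)) (bn t).
have ev : \xor_(j < N) bn (all_ones N) j = false.
  rewrite -oddw hw1; move/eqP: (N4 h1); rewrite -/(dvdn 4 N) => d.
  by apply/negbTE; rewrite -dvdn2; apply: dvdn_trans d.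
have tt : \xor_(j < N) (bn (all_ones N) j && bn t j) = true.
  by rewrite -[X in _ = X]todd; apply: eq_bigr => j _; rewrite bn1 ltn_ord.
rewrite ev tt /= in B.
move: B; move: (\xor_(j < N) (bn (all_ones N) j && p0 t j)) (\xor_(j < N) (bn t j && p0 (all_ones N) j)).
move: (s 0) (h (all_ones N)) (h 0) (h t) (h (t + all_ones N)).
by do 7!case.
Qed.
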